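(* Let $r$ be the stochastic relative degree of system $(\Sigma_0)$ at $\bar x$. Then, for all $x$ in a neighbourhood of $\bar x$, $$\mathcal S^k_{f,l}h(x)=L^k_{f_S}h(x)\qquad\text{for all }k\in\{0,\dots,r-1\},$$ where $f_S(x)=f(x)-\frac12\frac{\partial l}{\partial x}(x)l(x)$.
   Context: System $(\Sigma_0)$: $dx_t=(f(x_t)+g(x_t)u)dt+l(x_t)d\mathcal W_t$, $y_t=h(x_t)$ (Itô sense), equivalently $\dot x_t=f(x_t)+g(x_t)u+l(x_t)\xi_t$ with $\xi_t$ white noise, $x\in\mathbb R^n$, $f,g,l:\mathbb R^n\to\mathbb R^n$, $h:\mathbb R^n\to\mathbb R$ smooth. Notation: $L_fh=\frac{\partial h}{\partial x}f$, $L^k_f h=L_fL_f^{k-1}h$, $L^0_fh=h$; $H_{l,l}h=l^\top\frac{\partial^2h}{\partial x^2}l$; $\mathcal S_{f,l}h(\xi,x)=L_fh(x)+L_lh(x)\xi+\frac12H_{l,l}h(x)$, iterated as $\mathcal S^k_{f,l}h=\mathcal S_{f,l}\mathcal S^{k-1}_{f,l}h$ whenever $\mathcal S^{k-1}_{f,l}h$ is independent of $\xi$, $\mathcal S^0_{f,l}h=h$. Stochastic relative degree $r$ at $\bar x$ for $(\Sigma_0)$: (ND) $L_l\mathcal S^k_{f,l}h(x)=0$ for all $x$ near $\bar x$ and $k\in\{0,\dots,r-2\}$; (CD) $L_g\mathcal S^k_{f,l}h(x)=0$ for all $x$ near $\bar x$ and $k\in\{0,\dots,r-2\}$; (RD)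 $L_g\mathcal S^{r-1}_{f,l}h(\bar x)\neq0$. *)

(* Defs.v *)
From HB Require Import structures.
From mathcomp Require Import all_boot all_order all_algebra.
From mathcomp Require Import all_classical all_reals all_analysis.
Set Implicit Arguments. Unset Strict Implicit. Unset Printing Implicit Defensive.
Import Order.TTheory GRing.Theory Num.Theory.
Import numFieldNormedType.Exports.
Local Open Scope ring_scope.

Section Defs.
Variables (R : realType) (n : nat).
Local Notation V := 'rV[R]_n.

Fixpoint Dn {W : normedModType R} (vs : seq V) (F : V -> W) : V -> W :=
  match vs with
  | [::] => F
  | v :: vs' => fun x => 'D_v (Dn vs' F) x
  end.

Definition smooth {W : normedModType R} (F : V -> W) : Prop :=
  forall (vs : seq V) (x : V), differentiable (Dn vs F) x.

Definition Lie (f : V -> V) (h : V -> R) : V -> R := fun x => 'D_(f x) h x.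

Fixpoint Lie_iter (f : V -> V) (k : nat) (h : V -> R) : V -> R :=
  match k with
  | 0%N => h
  | k'.+1 => Lie f (Lie_iter f k' h)
  end.

(* H_{l,l} h (x) = l(x)^T (d^2 h/dx^2)(x) l(x) *)
Definition Hll (l : V -> V) (h : V -> R) : V -> R :=
  fun x => 'D_(l x) (fun y => 'D_(l x) h y) x.

Definition Sop (f l : V -> V) (h : V -> R) (xi : R) : V -> R :=
  fun x => Lie f h x + Lie l h x * xi + 2^-1 * Hll l h x.

(* The iteration S^{k+1} = S S^k is only meaningful when
   S^k is independent of xi; we feed the previous iterate as the function
   x |-> S^k h (0, x) (which equals S^k h (xi, x) for every xi wherever
   the independence holds). *)
Fixpoint Siter (f l : V -> V) (k : nat) (h : V -> R) : R -> V -> R :=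
  match k with
  | 0%N => fun _ => h
  | k'.+1 => Sop f l (Siter f l k' h 0)
  end.

Definition stoch_rel_deg (f g l : V -> V) (h : V -> R) (r : nat) (xbar : V)
  : Prop :=
  (0 < r)%N /\
  (forall k : nat, (k.+2 <= r)%N -> forall xi : R,
     \forall x \near xbar, Lie l (Siter f l k h xi) x = 0) /\
  (forall k : nat, (k.+2 <= r)%N -> forall xi : R,
     \forall x \near xbar, Lie g (Siter f l k h xi) x = 0) /\
  (forall xi : R, Lie g (Siter f l r.-1 h xi) xbar != 0).

Definition fS (f l : V -> V) : V -> V :=
  fun x => f x - 2^-1 *: 'D_(l x) l x.

End Defs.

(* Main.v *)
Require Import Defs.
From HB Require Import structures.
From mathcomp Require Import all_boot all_order all_algebra.
From mathcomp Require Import all_classical all_reals all_analysis.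
Import Order.TTheory GRing.Theory Num.Theory.
Import numFieldNormedType.Exports.
Local Open Scope ring_scope.
Section S.
Variables (R : realType) (n : nat).
Local Notation V := 'rV[R]_n.
Implicit Types (F G : V -> R).

Lemma Dn_rcons {W : normedModType R} vs v (F : V -> W) :
  Dn (rcons vs v) F = Dn vs (fun x => 'D_v F x).
Proof. by elim: vs => [|w vs IH] //=; rewrite IH. Qed.

Lemma smooth_D {W : normedModType R} (F : V -> W) v : smooth F -> smooth (fun x => 'D_v F x).
Proof. by move=> sF vs x; rewrite -Dn_rcons; apply: sF. Qed.

Lemma Dn_add {W : normedModType R} vs (A B : V -> W) :
  (forall ws, (size ws < size vs)%N -> forall x, differentiable (Dn ws A) x /\ differentiable (Dn ws B) x) ->
  Dn vs (fun x => A x + B x) = (fun x => Dn vs A x + Dn vs B x).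
Proof.
elim: vs => [|v vs IH] H //=.
rewrite IH; last by move=> ws hws x; apply: H; rewrite /= ltnS ltnW.
apply/funext => x; rewrite deriveD //; apply: diff_derivable; apply H => //.
Qed.

Lemma Dn_scale {W : normedModType R} vs k (A : V -> W) : smooth A ->
  Dn vs (fun x => k *: A x) = (fun x => k *: Dn vs A x).
Proof.
move=> sA; elim: vs => [|v vs IH] //=.
rewrite IH; apply/funext => x; rewrite deriveZ //; exact: diff_derivable.
Qed.

Lemma smoothD {W : normedModType R} (A B : V -> W) : smooth A -> smooth B -> smooth (fun x => A x + B x).
Proof. move=> sA sB vs x; rewrite Dn_add; first exact: differentiableD.
by move=> ws _ y; split. Qed.

Lemma smoothZ {W : normedModType R} k (A : V -> W) : smooth A -> smooth (fun x => k *: A x).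
Proof. by move=> sA vs x; rewrite Dn_scale //; apply: differentiableZ. Qed.

Lemma Dn_cst0 {W : normedModType R} vs : Dn vs (fun _ : V => 0 : W) = (fun _ => 0).
Proof. elim: vs => [|v vs IH] //=; rewrite IH; apply/funext => x.
exact: (derive_cst (0:W)). Qed.

Lemma smooth0 {W : normedModType R} : smooth (fun _ : V => 0 : W).
Proof. by move=> vs x; rewrite Dn_cst0; apply: differentiable_cst. Qed.

Lemma smooth_sum {W : normedModType R} (I : Type) (s : seq I) (A : I -> V -> W) :
  (forall i, smooth (A i)) -> smooth (fun x => \sum_(i <- s) A i x).
Proof.
move=> sA; elim: s => [|i s IH].
  under eq_fun do rewrite big_nil; exact: smooth0.
under eq_fun do rewrite big_cons; exact: smoothD.
Qed.

Lemma deriveM' F G x v : differentiable F x -> differentiable G x ->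
  'D_v (fun y => F y * G y) x = 'D_v F x * G x + F x * 'D_v G x.
Proof.
move=> dF dG.
have dF' : derivable F x v by exact: diff_derivable.
have dG' : derivable G x v by exact: diff_derivable.
have := deriveM dF' dG'.
rewrite /= => ->. by rewrite addrC mulrC.
Qed.


Lemma smoothM_aux N : forall vs : seq V, (size vs <= N)%N -> forall F G, smooth F -> smooth G ->
  forall x, differentiable (Dn vs (fun y => F y * G y)) x.
Proof.
elim: N => [|N IH] vs.
  by rewrite leqn0 => /nilP -> F G sF sG x /=; apply: differentiableM; [exact: (sF [::])|exact: (sG [::])].
case/lastP: vs => [|ws v].
  by move=> _ F G sF sG x /=; apply: differentiableM; [exact: (sF [::])|exact: (sG [::])].
rewrite size_rcons ltnS => hws F G sF sG x.
rewrite Dn_rcons.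
have -> : (fun x => 'D_v (fun y => F y * G y) x) =
  (fun x => (fun y => 'D_v F y * G y) x + (fun y => F y * 'D_v G y) x).
  by apply/funext => y; rewrite deriveM' //; [exact: (sF [::])|exact: (sG [::])].
rewrite Dn_add; last first.
  move=> us hus y; split; apply: IH.
  - exact: leq_trans (ltnW hus) hws.
  - exact: smooth_D.
  - exact: sG.
  - exact: leq_trans (ltnW hus) hws.
  - exact: sF.
  - exact: smooth_D.
apply: differentiableD; apply: IH => //; exact: smooth_D.
Qed.

Lemma smoothM F G : smooth F -> smooth G -> smooth (fun y => F y * G y).
Proof. by move=> sF sG vs x; apply: (@smoothM_aux (size vs)). Qed.

Lemma derive_coord (A : V -> V) x v j : differentiable A x ->
  'D_v (fun y => A y 0 j) x = ('D_v A x) 0 j.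
Proof.
move=> dA.
have dc : differentiable (fun N : 'rV[R]_n => N 0 j : R) (A x) by exact: differentiable_coord.
rewrite deriveE; last first.
  exact: (@differentiable_comp _ _ _ _ A (fun N : 'rV[R]_n => N 0 j : R)).
rewrite (deriveE _ dA).
rewrite -[fun y => A y 0 j]/((fun N : 'rV[R]_n => N 0 j : R) \o A).
rewrite diff_comp //=.
have @f : {linear 'rV[R]_n -> R}.
  by exists (fun N : 'rV[R]_n => N 0 j); do 2![eexists]; do ?[constructor];
     rewrite ?mxE// => ? *; rewrite ?mxE//; move=> ?; rewrite !mxE.
rewrite (_ : (fun N : 'rV[R]_n => N 0 j) = f) //.
by rewrite diff_lin //; apply: coord_continuous.
Qed.


Local Notation e j := (delta_mx 0 j : 'rV[R]_n).

Lemma derive_dec {W : normedModType R} (F : V -> W) x w : differentiable F x ->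
  'D_w F x = \sum_(j < n) w 0 j *: 'D_(e j) F x.
Proof.
move=> dF; rewrite deriveE // {1}(row_sum_delta w) linear_sum.
by apply: eq_bigr => j _; rewrite linearZ deriveE.
Qed.

Lemma derive_sum' {W : normedModType R} (h : 'I_n -> V -> W) x v :
  (forall i, differentiable (h i) x) ->
  'D_v (fun y => \sum_(i < n) h i y) x = \sum_(i < n) 'D_v (h i) x.
Proof.
move=> dh; rewrite -derive_sum; last by move=> i; exact: diff_derivable.
by rewrite fct_sumE.
Qed.

Lemma Dn_coord vs (A : V -> V) j : smooth A ->
  Dn vs (fun x => A x 0 j) = (fun x => Dn vs A x 0 j).
Proof.
move=> sA; elim: vs => [|v vs IH] //=; rewrite IH; apply/funext => x.
by rewrite derive_coord.
Qed.

Lemma smooth_coord (A : V -> V) j : smooth A -> smooth (fun x => A x 0 j).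
Proof.
move=> sA vs x; rewrite Dn_coord //.
apply: (@differentiable_comp _ _ _ _ (Dn vs A) (fun N : 'rV[R]_n => N 0 j : R)).
  exact: sA.
exact: differentiable_coord.
Qed.

Lemma Lie_dec (f : V -> V) (phi : V -> R) x : differentiable phi x ->
  Lie f phi x = \sum_(j < n) f x 0 j * 'D_(e j) phi x.
Proof. by move=> dp; rewrite /Lie derive_dec. Qed.

Lemma smooth_Lie (f : V -> V) (phi : V -> R) :
  (forall j, smooth (fun x => f x 0 j)) -> smooth phi -> smooth (Lie f phi).
Proof.
move=> sf sp.
rewrite (_ : Lie f phi = fun x => \sum_(j < n) f x 0 j * 'D_(e j) phi x).
  apply: smooth_sum => j; apply: smoothM => //; exact: smooth_D.
apply/funext => x; apply: Lie_dec; exact: (sp [::]).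
Qed.

Lemma fS_coord (f l : V -> V) x j : smooth l ->
  fS f l x 0 j = f x 0 j + (- 2^-1) * \sum_(k < n) l x 0 k * 'D_(e k) (fun y => l y 0 j) x.
Proof.
move=> sl; rewrite /fS !mxE (derive_dec _ _ (l x) (sl [::] x)) summxE mulNr.
congr (_ - _ * _); apply: eq_bigr => k _; rewrite mxE derive_coord //.
exact: (sl [::]).
Qed.

Lemma smooth_fS (f l : V -> V) j : smooth f -> smooth l -> smooth (fun x => fS f l x 0 j).
Proof.
move=> sf sl.
rewrite (_ : (fun x => _) = fun x => f x 0 j + (- 2^-1) *: \sum_(k < n) l x 0 k * 'D_(e k) (fun y => l y 0 j) x).
  apply: smoothD; first exact: smooth_coord.
  apply: smoothZ; apply: smooth_sum => k; apply: smoothM; first exact: smooth_coord.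
  apply: smooth_D; exact: smooth_coord.
by apply/funext => x; rewrite fS_coord.
Qed.

Lemma smooth_Lie_iter (f l : V -> V) (h : V -> R) k : smooth f -> smooth l -> smooth h ->
  smooth (Lie_iter (fS f l) k h).
Proof.
move=> sf sl sh; elim: k => [|k IH] //=.
apply: smooth_Lie => // j; exact: smooth_fS.
Qed.


Lemma Lie_fS (f l : V -> V) (phi : V -> R) x : differentiable phi x ->
  Lie (fS f l) phi x = Lie f phi x - 2^-1 * 'D_('D_(l x) l x) phi x.
Proof.
move=> dp; rewrite /Lie /fS.
rewrite (deriveE (f x - 2^-1 *: 'D_(l x) l x) dp) linearB linearZ /=.
by rewrite -!(deriveE _ dp).
Qed.

Lemma Hll_key (l : V -> V) (phi : V -> R) x : smooth l -> smooth phi ->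
  (\forall y \near x, Lie l phi y = 0) -> Hll l phi x = - 'D_('D_(l x) l x) phi x.
Proof.
move=> sl sp hz.
have e1 : 'D_(l x) (Lie l phi) x = 0.
  rewrite (@near_eq_derive _ _ _ _ (cst 0)); first exact: derive_cst.
  by near=> y; rewrite (near hz y).
rewrite (_ : Lie l phi = fun y => \sum_(k < n) (fun y => l y 0 k * 'D_(e k) phi y) y) in e1; last first.
  by apply/funext => y; apply: Lie_dec; exact: (sp [::]).
rewrite derive_sum' in e1; last first.
  move=> k; apply: differentiableM; first exact: (smooth_coord _ k sl [::]).
  exact: (smooth_D _ (e k) sp [::]).
rewrite (eq_bigr (fun k => 'D_(l x) (fun y => l y 0 k) x * 'D_(e k) phi x + l x 0 k * 'D_(l x) (fun y => 'D_(e k) phi y) x)) in e1; last first.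
  move=> k _; rewrite deriveM' //; first exact: (smooth_coord _ _ sl [::]).
  exact: (smooth_D _ _ sp [::]).
rewrite big_split /= in e1.
rewrite /Hll.
rewrite (_ : (fun y => 'D_(l x) phi y) = fun y => \sum_(k < n) (fun y => l x 0 k *: 'D_(e k) phi y) y); last first.
  by apply/funext => y; apply: derive_dec; exact: (sp [::]).
rewrite derive_sum'; last first.
  move=> k; apply: differentiableZ; exact: (smooth_D _ (e k) sp [::]).
rewrite (derive_dec _ _ _ (sp [::] x)).
rewrite (eq_bigr (fun k => l x 0 k * 'D_(l x) (fun y => 'D_(e k) phi y) x)); last first.
  move=> k _; rewrite deriveZ //; apply: diff_derivable; exact: (smooth_D _ _ sp [::]).
rewrite [in RHS](eq_bigr (fun k => 'D_(l x) (fun y => l y 0 k) x * 'D_(e k) phi x)); last first.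
  by move=> k _; rewrite -derive_coord //; exact: (sl [::]).
apply/eqP; rewrite -addr_eq0 addrC e1 //.
Unshelve. all: by end_near.
Qed.

End S.

Lemma open_nb {R : realType} {n : nat} {U : set 'rV[R]_n} {y} : open U -> U y -> nbhs y U.
Proof. by move=> oU Uy; apply: open_nbhs_nbhs. Qed.

Theorem lemma1 (R : realType) (n : nat) (f g l : 'rV[R]_n -> 'rV[R]_n)
  (h : 'rV[R]_n -> R) (xbar : 'rV[R]_n) (r : nat) :
  smooth f -> smooth g -> smooth l -> smooth h ->
  stoch_rel_deg f g l h r xbar ->
  \forall x \near xbar, forall k : nat, (k < r)%N -> forall xi : R,
    Siter f l k h xi x = Lie_iter (fS f l) k h x.
Proof.
move=> sf sg sl sh [r0 [ND [CD RD]]].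
have Q : forall m, (m < r)%N -> exists U : set 'rV[R]_n, [/\ open U, U xbar &
   forall y, U y -> forall k, (k <= m)%N -> forall xi, Siter f l k h xi y = Lie_iter (fS f l) k h y].
  elim=> [|m IH] hm.
    exists setT; split => //; first exact: openT.
    by move=> y _ k; rewrite leqn0 => /eqP ->.
  have [U [oU Ux HU]] := IH (ltnW hm).
  set A := fun x => Lie l (Siter f l m h 0) x = 0.
  have nA : nbhs xbar A by exact: ND.
  exists ((U `&` A°)%classic); split.
  - apply: openI => //; exact: open_interior.
  - split => //; exact: nbhs_singleton (nbhs_interior nA).
  move=> y [Uy Ay] k; rewrite leq_eqVlt => /orP[/eqP ->|]; last by rewrite ltnS; apply: HU.
  move=> xi /=.
  set phi := Lie_iter (fS f l) m h.
  have sphi : smooth phi by exact: smooth_Lie_iter.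
  have eqS : forall z, U z -> \forall w \near z, Siter f l m h 0 w = phi w.
    move=> z Uz; near=> w; apply: HU => //; near: w; exact: open_nb oU Uz.
  have Ay' : Lie l (Siter f l m h 0) y = 0 by exact: (interior_subset Ay).
  rewrite /Sop Ay' mul0r addr0.
  rewrite /Lie (near_eq_derive _ (eqS y Uy)).
  have -> : Hll l (Siter f l m h 0) y = Hll l phi y.
    rewrite /Hll; apply: near_eq_derive.
    near=> w; apply: near_eq_derive; apply: eqS; near: w; exact: open_nb oU Uy.
  rewrite Hll_key //; last first.
    have oUA : open ((U `&` A°)%classic) by apply: openI => //; exact: open_interior.
    have nUA := open_nb oUA (conj Uy Ay).
    near=> w.
    have [Uw Aw] : (U `&` A°)%classic w by near: w.
    rewrite /Lie -(near_eq_derive _ (eqS w Uw)).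
    exact: (interior_subset Aw).
  by have := @Lie_fS R n f l phi y (sphi [::] y); rewrite /Lie => ->; rewrite mulrN.
have [U [oU Ux HU]] := Q r.-1 ltac:(by rewrite prednK).


near=> y => k hk xi.
apply: HU; first by near: y; exact: open_nb oU Ux.
rewrite -ltnS prednK //.
Unshelve. all: by end_near.
Qed.
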